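(* Let $\varphi:\mathcal{P}(\mathbf{N})\to[0,\infty]$ be a lower semicontinuous submeasure, and set $\|A\|_\varphi=\lim_{n}\varphi(A\setminus[1,n])$ for $A\subseteq\mathbf{N}$. Suppose $\|\mathbf{N}\|_\varphi=1$ and that $\mathcal{I}=\mathrm{Exh}(\varphi):=\{A\subseteq\mathbf{N}:\|A\|_\varphi=0\}$ is an analytic P-ideal. Then there exists a normalized capacity $\rho:\mathscr{B}(\mathrm{Ult}(\mathcal{I}))\to\mathbf{R}$ such that for every $A\subseteq\mathbf{N}$, $$\|A\|_\varphi=\int_{\mathrm{Ult}(\mathcal{I})}\mu_{\mathcal{F}}(A)\,\mathrm{d}\rho(\mathcal{F}).$$
   Context: A submeasure is $\varphi:\mathcal{P}(\mathbf{N})\to[0,\infty]$ with $\varphi(\emptyset)=0$, monotone and subadditive ($\varphi(A\cup B)\le\varphi(A)+\varphi(B)$); it is lower semicontinuous if $\varphi(A)=\lim_n\varphi(A\cap[1,n])$ for all $A$. An ideal on $\mathbf{N}$ is a family closed under subsets and finite unions, not containing $\mathbf{N}$, and containing all finite sets; it is a P-ideal if for every sequence $(A_n)$ in $\mathcal{I}$ there is $A\in\mathcal{I}$ with $A_n\setminus A$ finite for all $n$; analytic means analytic as a subset of the Cantor space $\{0,1\}^{\mathbf{N}}$. $\mathrm{Ult}(\mathcal{I})$ is the set of ultrafilters on $\mathbf{N}$ containing the dual filter $\{A:\mathbf{N}\setminus A\in\mathcal{I}\}$, with topology induced from $\beta\mathbf{N}$ (basic clopen sets $\{\mathcal{F}:A\in\mathcal{F}\}$);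 $\mathscr{B}$ denotes the Borel $\sigma$-algebra; $\mu_{\mathcal{F}}(A)=1$ if $A\in\mathcal{F}$, else $0$. A normalized capacity is a monotone set function with value $0$ at $\emptyset$ and $1$ at the whole space; the integral is the Choquet integral $\int_0^\infty\rho(f\ge t)\,\mathrm{d}t+\int_{-\infty}^0[\rho(f\ge t)-1]\,\mathrm{d}t$. *)

(* Defs.v *)
From HB Require Import structures.
From mathcomp Require Import all_boot all_order all_algebra.
From mathcomp Require Import all_classical all_reals all_analysis.
Set Implicit Arguments. Unset Strict Implicit. Unset Printing Implicit Defensive.
Import Order.TTheory GRing.Theory Num.Theory.
Local Open Scope classical_set_scope.
Local Open Scope ring_scope.

(* Convention: N is modelled by nat = {0,1,2,...}; the initial segment
   [1,n] of the paper is modelled by [set k | k < n] (the first n elements). *)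
Definition iseg (n : nat) : set nat := [set k | (k < n)%N].

Section Defs.
Variable R : realType.
Local Open Scope ereal_scope.

Definition submeasure (phi : set nat -> \bar R) : Prop :=
  [/\ phi set0 = 0,
      (forall A, 0 <= phi A),
      (forall A B, A `<=` B -> phi A <= phi B) &
      (forall A B, phi (A `|` B) <= phi A + phi B)].

Definition lsc_submeasure (phi : set nat -> \bar R) : Prop :=
  submeasure phi /\
  forall A, phi A = limn (fun n => phi (A `&` iseg n)).

Definition phinorm (phi : set nat -> \bar R) (A : set nat) : \bar R :=
  limn (fun n => phi (A `\` iseg n)).

Definition Exh (phi : set nat -> \bar R) : set (set nat) :=
  [set A | phinorm phi A = 0].
End Defs.

Definition is_ideal (I : set (set nat)) : Prop :=
  [/\ (forall A B, B `<=` A -> I A -> I B),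
      (forall A B, I A -> I B -> I (A `|` B)),
      ~ I setT &
      (forall A, finite_set A -> I A)].

Definition is_P_ideal (I : set (set nat)) : Prop :=
  is_ideal I /\
  forall An : nat -> set nat, (forall n, I (An n)) ->
    exists A, I A /\ forall n, finite_set (An n `\` A).

Definition baire_space : Type := prod_topology (fun _ : nat => discrete_topology nat).

Definition analytic_set (T : topologicalType) (S : set T) : Prop :=
  S = set0 \/ exists f : baire_space -> T, continuous f /\ range f = S.

(* P(N) is identified with the Cantor space {0,1}^N via x <-> [set n | x n] *)
Definition analytic_family (I : set (set nat)) : Prop :=
  analytic_set [set x : cantor_space | I [set n | x n]].

Definition ultrafilter_on_nat (U : set (set nat)) : Prop :=
  [/\ ~ U set0,
      U setT,
      (forall A B, A `<=` B -> U A -> U B),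
      (forall A B, U A -> U B -> U (A `&` B)) &
      (forall A, U A \/ U (~` A))].

Definition Ult (I : set (set nat)) : set (set (set nat)) :=
  [set U | ultrafilter_on_nat U /\ forall A, I (~` A) -> U A].

(* topology on Ult(I) induced from beta N: basic clopen sets {U | A \in U} *)
Definition basic_clopen (I : set (set nat)) (A : set nat) : set (set (set nat)) :=
  [set U | Ult I U /\ U A].

Definition Ult_open (I : set (set nat)) (O : set (set (set nat))) : Prop :=
  O `<=` Ult I /\
  forall U, O U -> exists A, U A /\ basic_clopen I A `<=` O.

Definition Ult_Borel (I : set (set nat)) : set (set (set (set nat))) :=
  <<s Ult I, Ult_open I >>.

Section Capacity.
Variable R : realType.
Local Open Scope ereal_scope.

Definition normalized_capacity (I : set (set nat))
    (rho : set (set (set nat)) -> R) : Prop :=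
  [/\ rho set0 = 0%R,
      rho (Ult I) = 1%R &
      (forall B C, Ult_Borel I B -> Ult_Borel I C -> B `<=` C ->
         (rho B <= rho C)%R)].

Definition choquet_integral (I : set (set nat))
    (rho : set (set (set nat)) -> R) (f : set (set nat) -> R) : \bar R :=
  (\int[@lebesgue_measure R]_(t in `[0%R, +oo[%classic)
      (rho [set U | Ult I U /\ (t <= f U)%R])%:E) +
  (\int[@lebesgue_measure R]_(t in `]-oo, 0%R[%classic)
      (rho [set U | Ult I U /\ (t <= f U)%R] - 1)%:E).

Definition mu_ult (U : set (set nat)) (A : set nat) : R :=
  if `[< U A >] then 1%R else 0%R.
End Capacity.

(* Main.v *)
Require Import Defs.
From HB Require Import structures.
From mathcomp Require Import all_boot all_order all_algebra.
From mathcomp Require Import all_classical all_reals all_analysis.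
Import Order.TTheory GRing.Theory Num.Theory.
Local Open Scope classical_set_scope.
Local Open Scope ereal_scope.
From mathcomp Require Import measurable_realfun.

Section PN.
Variables (R : realType) (phi : set nat -> \bar R).
Hypothesis sphi : submeasure phi.

Lemma pn_noninc A : nonincreasing_seq (fun n => phi (A `\` iseg n)).
Proof.
case: sphi => _ _ mon _.
apply/nonincreasing_seqP => n; apply: mon => x [Ax Hx]; split => //.
by move=> H; apply: Hx; rewrite /iseg /= in H *; apply: ltn_trans H _.
Qed.

Lemma pn_cvg A : cvgn (fun n => phi (A `\` iseg n)).
Proof. exact: ereal_nonincreasing_is_cvgn (pn_noninc A). Qed.

Lemma pn_ge0 A : 0 <= phinorm phi A.
Proof.
case: sphi => _ h0 _ _.
by apply: lime_ge; [exact: pn_cvg | apply: nearW => n].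
Qed.

Lemma pn_mono A B : A `<=` B -> phinorm phi A <= phinorm phi B.
Proof.
case: sphi => _ _ mon _ AB.
apply: lee_lim; [exact: pn_cvg|exact: pn_cvg|].
by apply: nearW => n; apply: mon => x [Ax Hx]; split => //; apply: AB.
Qed.

Lemma pn_subadd A B : phinorm phi (A `|` B) <= phinorm phi A + phinorm phi B.
Proof.
case: sphi => _ h0 mon sub.
rewrite /phinorm -limeD; [|exact: pn_cvg|exact: pn_cvg|].
- apply: lee_lim; [exact: pn_cvg| |].
  + apply: is_cvgeD; [|exact: pn_cvg|exact: pn_cvg].
    by apply: ge0_adde_def; rewrite inE; apply: (pn_ge0).
  + apply: nearW => n /=; rewrite setDUl; exact: sub.
- by apply: ge0_adde_def; rewrite inE; apply: (pn_ge0).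
Qed.
End PN.
Arguments pn_ge0 {R phi}.
Arguments pn_mono {R phi} sphi {A B}.
Arguments pn_subadd {R phi}.
Lemma ult_exists (I : set (set nat)) : is_ideal I ->
  forall D, ~ I D -> exists U, Ult I U /\ U D.
Proof.
case=> Idown IU _ Ifin D ND.
pose F := [set X : set nat | exists B, I B /\ D `&` ~` B `<=` X].
have I0 : I set0 by apply: Ifin.
have PF : ProperFilter F.
  constructor.
  - move=> [B [IB sub]]; apply: ND; apply: (Idown B) => // x Dx.
    by apply: contrapT => nBx; exact: (sub x (conj Dx nBx)).
  - constructor.
    + by exists set0; split.
    + move=> X Y [B1 [IB1 s1]] [B2 [IB2 s2]]; exists (B1 `|` B2); split; first exact: IU.
      move=> x [Dx nB]; split; [apply: s1|apply: s2]; (split => //; move=> h; apply: nB; by [left|right]).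
    + move=> P Q PQ [B [IB s]]; exists B; split => //; exact: subset_trans PQ.
have [G [UG FG]] := ultraFilterLemma PF.
exists G; split; last by apply: FG; exists set0; split => // x [].
split; last first.
  by move=> A IA; apply: FG; exists (~` A); split => // x [_ h]; apply: contrapT.
split.
- exact: filter_not_empty.
- exact: filterT.
- by move=> A B AB; apply: filterS.
- by move=> A B; apply: filterI.
- by move=> A; apply: in_ultra_setVsetC.
Qed.
Section Choq.
Variables (R : realType) (I : set (set nat)) (rho : set (set (set nat)) -> R) (A : set nat).
Let S (t : R) := [set U | Ult I U /\ (t <= @mu_ult R U A)%R].

Lemma S_neg t : (t <= 0)%R -> S t = Ult I.
Proof.
move=> t0; apply/seteqP; split => U; first by case.
move=> UU; split => //; rewrite /mu_ult; case: ifP => _ //.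
exact: le_trans t0 ler01.
Qed.

Lemma S_mid t : (0 < t)%R -> (t <= 1)%R -> S t = basic_clopen I A.
Proof.
move=> t0 t1; apply/seteqP; split => U [UU h]; split => //.
- move: h; rewrite /mu_ult; case: ifP => [/asboolP //|_ h].
  by move: (lt_le_trans t0 h); rewrite ltxx.
- by rewrite /mu_ult; case: ifP => // /asboolP.
Qed.

Lemma S_big t : (1 < t)%R -> S t = set0.
Proof.
move=> t1; apply/seteqP; split => U // [_ h]; exfalso; move: h.
rewrite /mu_ult; case: ifP => _ h.
- by move: (lt_le_trans t1 h); rewrite ltxx.
- by move: (lt_le_trans (lt_trans ltr01 t1) h); rewrite ltxx.
Qed.

Lemma choq_step c : (0 <= c)%R -> rho set0 = 0%R -> rho (Ult I) = 1%R ->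
  rho (basic_clopen I A) = c ->
  choquet_integral I rho (fun U => @mu_ult R U A) = c%:E.
Proof.
move=> c0 r0 r1 rc; rewrite /choquet_integral.
rewrite [X in _ + X]integral0_eq; last first.
  move=> t; rewrite /= in_itv /= => t0.
  by rewrite -/(S t) S_neg ?r1 ?subrr // ltW.
rewrite adde0 -integral_itv_obnd_cbnd; last first.
  have mh : measurable_fun (T:=R) (U:=\bar R) (`]0%R, +oo[ : set R) (fun t : R => (c * \1_(`]0%R, 1%R]) t)%:E).
    apply/measurable_EFinP; apply: measurable_funM => //.
  apply: eq_measurable_fun mh.
  move=> t; rewrite ?inE /= in_itv /= andbT => t0.
  rewrite -/(S t) /indic; have [t1|t1] := leP t 1%R.
    by rewrite S_mid // rc mem_set ?mulr1 //= in_itv /= t0 t1.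
  by rewrite S_big // r0 memNset ?mulr0 //= in_itv /= t0 leNgt t1.
transitivity (\int[lebesgue_measure]_(t in (`]0%R, +oo[ : set R)) ((c * \1_(`]0%R, 1%R]) t)%:E)); first apply: eq_integral.
  move=> t; rewrite ?inE /= in_itv /= andbT => t0.
  rewrite -/(S t) /indic; have [t1|t1] := leP t 1%R.
    by rewrite S_mid // rc mem_set ?mulr1 //= in_itv /= t0 t1.
  by rewrite S_big // r0 memNset ?mulr0 //= in_itv /= t0 leNgt t1.
have := @integralZl_indic _ _ _ (@lebesgue_measure R) (`]0%R, +oo[ : set R) ltac:(by []) (fun _ : R => (`]0%R, 1%R] : set R)) c. move=> ->; last by []; last by move=> /(le_lt_trans c0); rewrite ltxx.
rewrite integral_indic //.
rewrite (_ : `]0%R, 1%R] `&` `]0%R, +oo[ = `]0%R, 1%R]%classic); last first.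
  apply/seteqP; split => t; first by case.
  move=> h; split => //; move: h; rewrite /= !in_itv /= => /andP[] -> //.
have := @lebesgue_measure_itv R (Interval (BRight 0%R) (BRight 1%R)); rewrite /=. rewrite lte01 oppr0 adde0 => ->; by rewrite mule1.
Qed.
End Choq.

Theorem corollary1p3 (R : realType) (phi : set nat -> \bar R) :
  lsc_submeasure phi ->
  phinorm phi setT = 1 ->
  is_P_ideal (Exh phi) ->
  analytic_family (Exh phi) ->
  exists rho : set (set (set nat)) -> R,
    normalized_capacity (Exh phi) rho /\
    forall A : set nat,
      phinorm phi A =
      choquet_integral (Exh phi) rho (fun U => @mu_ult R U A).
Proof.
move=> [sphi _] hN [Iid _] _.
set I := Exh phi.
pose nrm A := fine (phinorm phi A).
have pnE A : phinorm phi A = (nrm A)%:E.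
  rewrite /nrm fineK // ge0_fin_numE ?(pn_ge0 sphi) //.
  by rewrite (le_lt_trans (pn_mono sphi (@subsetT _ A))) // hN ltey.
have nrm0 A : (0 <= nrm A)%R by rewrite -lee_fin -pnE (pn_ge0 sphi).
have nrm1 A : (nrm A <= 1)%R by rewrite -lee_fin -pnE -hN (pn_mono sphi (@subsetT _ A)).
have Isub : forall A' A, basic_clopen I A' `<=` basic_clopen I A -> (nrm A' <= nrm A)%R.
  move=> A' A sub.
  have ID : I (A' `\` A).
    apply: contrapT => ND.
    have [U [UU UD]] := @ult_exists I Iid _ ND.
    have [[Un0 _ Umon UI _] _] := UU.
    have UA' : U A' by apply: (Umon (A' `\` A)) => // x [].
    have [_ UA] := sub U (conj UU UA').
    apply: Un0; rewrite -(setICr A); apply: UI => //.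
    by apply: (Umon (A' `\` A)) => // x [].
  rewrite -lee_fin -!pnE.
  apply: (le_trans (pn_mono sphi (_ : A' `<=` A `|` (A' `\` A)))).
    by move=> x Ax; have [h|h] := pselect (A x); [left|right].
  apply: (le_trans (pn_subadd sphi _ _)).
  by rewrite ID adde0.
pose E B := [set nrm A | A in [set A | basic_clopen I A `<=` B]].
pose rho B := sup (E B).
have Ene B : E B !=set0 by exists (nrm set0); exists set0 => // U [[[]]].
have Eub B : has_ubound (E B) by exists 1%R => _ [A _ <-].
have rhoC A : rho (basic_clopen I A) = nrm A.
  apply/le_anti/andP; split.
    by apply: ge_sup => // _ [A' h <-]; apply: Isub.
  by apply: ub_le_sup => //; exists A.
have cl0 : basic_clopen I set0 = set0.
  by apply/seteqP; split => U // [[[]]].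
have clT : basic_clopen I setT = Ult I.
  by apply/seteqP; split => U; [case|move=> UU; split => //; case: UU => -[]].
have I0 : phinorm phi set0 = 0 by case: Iid => _ _ _ Ifin; apply: Ifin.
exists rho; split.
  split.
  - by rewrite -cl0 rhoC /nrm I0.
  - by rewrite -clT rhoC /nrm hN.
  - move=> B C _ _ BC; apply: ge_sup => // _ [A h <-].
    by apply: ub_le_sup => //; exists A => //; apply: subset_trans BC.
move=> A; rewrite pnE; apply/esym/choq_step => //.
- by rewrite -cl0 rhoC /nrm I0.
- by rewrite -clT rhoC /nrm hN.
Qed.
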